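(* Let $\mathbb{E}$ be a regular category and $(f,s)\colon X\rightleftarrows Y$ a split epimorphism. Then $(f,s)$ is strongly split if and only if, for every monomorphism $m\colon Y'\rightarrowtail Y$ with pullback $n\colon X'\rightarrowtail X$ of $m$ along $f$, the pair of monomorphisms $(s,n)$ is jointly strongly epic, i.e. the subobject $1_X$ is the supremum of the subobjects $s$ and $n$.
   Context: A split epimorphism is a pair $(f,s)$ with $fs=1$. A pair of morphisms with common codomain $Z$ is jointly extremally (equivalently, in a regular category, strongly) epic if it factors jointly through no non-invertible monomorphism into $Z$. A split epimorphism $(f,s)\colon X\rightleftarrows Y$ is strongly split when, for every morphism $y\colon\bar Y\to Y$, with $x\colon\bar X=\bar Y\times_YX\to X$ the pullback projection, the pair $(x,s)$ is jointly extremally epic. *)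

(* Defs.v *)
Set Implicit Arguments.
Unset Strict Implicit.

Record Category := {
  Obj :> Type;
  Hom : Obj -> Obj -> Type;
  idm : forall A, Hom A A;
  comp : forall A B C, Hom B C -> Hom A B -> Hom A C;
  comp_id_l : forall A B (f : Hom A B), comp (idm B) f = f;
  comp_id_r : forall A B (f : Hom A B), comp f (idm A) = f;
  comp_assoc : forall A B C D (h : Hom C D) (g : Hom B C) (f : Hom A B),
      comp h (comp g f) = comp (comp h g) f
}.

Arguments Hom {c} _ _.
Arguments idm {c} _.
Arguments comp {c} {A B C} _ _.

Notation "g \o f" := (comp g f) (at level 40, left associativity).

Section Defs.
Variable C : Category.

Definition is_mono {A B : C} (m : Hom A B) : Prop :=
  forall Z (u v : Hom Z A), m \o u = m \o v -> u = v.

Definition is_iso {A B : C} (f : Hom A B) : Prop :=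
  exists g : Hom B A, g \o f = idm A /\ f \o g = idm B.

Definition is_terminal (T : C) : Prop :=
  forall A : C, exists t : Hom A T, forall t' : Hom A T, t' = t.

Definition is_pullback {A B Z P : C} (f : Hom A Z) (g : Hom B Z)
    (p1 : Hom P A) (p2 : Hom P B) : Prop :=
  f \o p1 = g \o p2 /\
  forall Q (q1 : Hom Q A) (q2 : Hom Q B), f \o q1 = g \o q2 ->
    exists u : Hom Q P, (p1 \o u = q1 /\ p2 \o u = q2) /\
      forall u' : Hom Q P, p1 \o u' = q1 -> p2 \o u' = q2 -> u' = u.

Definition is_coequalizer {A B Q : C} (u v : Hom A B) (e : Hom B Q) : Prop :=
  e \o u = e \o v /\
  forall W (h : Hom B W), h \o u = h \o v ->
    exists k : Hom Q W, k \o e = h /\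
      forall k' : Hom Q W, k' \o e = h -> k' = k.

Definition is_regular_epi {B Q : C} (e : Hom B Q) : Prop :=
  exists (A : C) (u v : Hom A B), is_coequalizer u v e.

Definition is_regular : Prop :=
  (exists T : C, is_terminal T) /\
  (forall (A B Z : C) (f : Hom A Z) (g : Hom B Z),
      exists (P : C) (p1 : Hom P A) (p2 : Hom P B), is_pullback f g p1 p2) /\
  (forall (A B P : C) (f : Hom A B) (p1 p2 : Hom P A),
      is_pullback f f p1 p2 -> exists (Q : C) (e : Hom A Q), is_coequalizer p1 p2 e) /\
  (forall (A B Z P : C) (e : Hom A Z) (g : Hom B Z) (p1 : Hom P A) (p2 : Hom P B),
      is_regular_epi e -> is_pullback e g p1 p2 -> is_regular_epi p2).

Definition jointly_extremally_epic {A B Z : C} (a : Hom A Z) (b : Hom B Z) : Prop :=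
  forall (M : C) (m : Hom M Z) (a' : Hom A M) (b' : Hom B M),
    is_mono m -> m \o a' = a -> m \o b' = b -> is_iso m.

Definition jointly_strongly_epic {A B Z : C} (a : Hom A Z) (b : Hom B Z) : Prop :=
  forall (U V : C) (m : Hom U V) (g : Hom Z V) (ua : Hom A U) (ub : Hom B U),
    is_mono m -> m \o ua = g \o a -> m \o ub = g \o b ->
    exists d : Hom Z U, (m \o d = g /\ d \o a = ua /\ d \o b = ub) /\
      forall d' : Hom Z U, m \o d' = g -> d' \o a = ua -> d' \o b = ub -> d' = d.

Definition is_split_epi {X Y : C} (f : Hom X Y) (s : Hom Y X) : Prop :=
  f \o s = idm Y.

Definition strongly_split {X Y : C} (f : Hom X Y) (s : Hom Y X) : Prop :=
  forall (Ybar Xbar : C) (y : Hom Ybar Y) (x : Hom Xbar X) (fbar : Hom Xbar Ybar),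
    is_pullback f y x fbar -> jointly_extremally_epic x s.

End Defs.

Arguments is_regular : clear implicits.

(* Main.v *)
Require Import Defs.

Section L.
Context {E : Category}.

Lemma regepi_epi (B Q : E) (e : Hom B Q) : is_regular_epi e ->
  forall W (h k : Hom Q W), h \o e = k \o e -> h = k.
Proof.
  intros [A [u [v [Hc Hu]]]] W h k Hhk.
  destruct (Hu W (h \o e)) as [k0 [Hk0 Hun]].
  { rewrite <- !comp_assoc, Hc. reflexivity. }
  rewrite (Hun h eq_refl). symmetry. apply Hun. symmetry; exact Hhk.
Qed.

Lemma regepi_lift (B Q U V : E) (e : Hom B Q) (M : Hom U V) (a : Hom B U)
  (n : Hom Q V) : is_regular_epi e -> is_mono M -> M \o a = n \o e ->
  exists k : Hom Q U, M \o k = n.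
Proof.
  intros He HM Ha.
  pose proof He as [A [u [v [Hc Hu]]]].
  destruct (Hu U a) as [k [Hk _]].
  { apply HM. rewrite !comp_assoc, Ha, <- !comp_assoc, Hc. reflexivity. }
  exists k. apply (@regepi_epi _ _ e He V). rewrite <- comp_assoc, Hk. exact Ha.
Qed.

Lemma pb_mono (A B Z P : E) (a : Hom A Z) (b : Hom B Z) (p1 : Hom P A)
  (p2 : Hom P B) : is_pullback a b p1 p2 -> is_mono b -> is_mono p1.
Proof.
  intros [Hc Hu] Hb W u v Huv.
  assert (H2 : p2 \o u = p2 \o v).
  { apply Hb. rewrite !comp_assoc, <- Hc, <- !comp_assoc, Huv. reflexivity. }
  destruct (Hu W (p1 \o u) (p2 \o u)) as [w [_ Hw]].
  { rewrite !comp_assoc, Hc. reflexivity. }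
  rewrite (Hw u eq_refl eq_refl). symmetry. apply Hw; [symmetry; exact Huv | symmetry; exact H2].
Qed.

Lemma image_fact : is_regular E -> forall (A B : E) (y : Hom A B),
  exists (Q : E) (e : Hom A Q) (m : Hom Q B),
    is_regular_epi e /\ is_mono m /\ m \o e = y.
Proof.
  intros [_ [Hpb [Hcoeq Hstab]]] A B y.
  destruct (Hpb _ _ _ y y) as [K0 [p1 [p2 Hp]]].
  destruct (Hcoeq _ _ _ y p1 p2 Hp) as [Q [e He]].
  pose proof He as [Hce Hue].
  destruct (Hue B y) as [m [Hm _]]. { exact (proj1 Hp). }
  assert (Hre : is_regular_epi e) by (exists K0, p1, p2; exact He).
  exists Q, e, m. split; [exact Hre|]. split; [|exact Hm].
  destruct (Hpb _ _ _ m m) as [K [k1 [k2 Hk]]].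
  assert (Hkk : k1 = k2).
  { destruct (Hpb _ _ _ e k1) as [L [l1 [l2 Hl]]].
    pose proof (Hstab _ _ _ _ e k1 l1 l2 Hre Hl) as Hl2.
    destruct (Hpb _ _ _ e (k2 \o l2)) as [N [n1 [n2 Hn]]].
    pose proof (Hstab _ _ _ _ e _ n1 n2 Hre Hn) as Hn2.
    destruct (proj2 Hp N (l1 \o n2) n1) as [t [[Ht1 Ht2] _]].
    { rewrite <- Hm, <- !comp_assoc, (comp_assoc e l1 n2), (proj1 Hl).
      rewrite (comp_assoc m (k1 \o l2) n2), (comp_assoc m k1 l2), (proj1 Hk).
      rewrite <- !comp_assoc, (proj1 Hn), !comp_assoc. reflexivity. }
    apply (@regepi_epi _ _ l2 Hl2). apply (@regepi_epi _ _ n2 Hn2).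
    rewrite <- (proj1 Hl), <- (proj1 Hn), <- comp_assoc, <- Ht1, <- Ht2, !comp_assoc, Hce. reflexivity. }
  intros W u v Huv.
  destruct (proj2 Hk W u v Huv) as [z [[Hz1 Hz2] _]].
  rewrite <- Hz1, <- Hz2, Hkk. reflexivity.
Qed.

End L.

Theorem proposition8p2 (E : Category) (X Y : E) (f : Hom X Y) (s : Hom Y X) :
  is_regular E ->
  is_split_epi f s ->
  (strongly_split f s <->
   forall (Y' X' : E) (m : Hom Y' Y) (n : Hom X' X) (f' : Hom X' Y'),
     is_mono m -> is_pullback f m n f' -> jointly_strongly_epic s n).
Proof.
  intros Hreg Hsplit. split.
  - intros Hss Y' X' m n f' Hm Hpbn U V M g ua ub HM Hua Hub.
    destruct (proj1 (proj2 Hreg) _ _ _ g M) as [P [p1 [p2 Hp]]].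
    pose proof (@pb_mono _ _ _ _ _ _ _ _ _ Hp HM) as Hp1.
    destruct (proj2 Hp Y s ua) as [bs [[Hbs _] _]]. { symmetry; exact Hua. }
    destruct (proj2 Hp X' n ub) as [bn [[Hbn _] _]]. { symmetry; exact Hub. }
    destruct (Hss _ _ m n f' Hpbn P p1 bn bs Hp1 Hbn Hbs) as [q [Hq1 Hq2]].
    exists (p2 \o q). split.
    + split.
      * rewrite comp_assoc, <- (proj1 Hp), <- comp_assoc, Hq2, comp_id_r. reflexivity.
      * split; apply HM; rewrite ?Hua, ?Hub, !comp_assoc, <- (proj1 Hp),
          <- (comp_assoc g p1 q), Hq2, comp_id_r; reflexivity.
    + intros d' Hd' _ _. apply HM. rewrite Hd', comp_assoc, <- (proj1 Hp),
        <- comp_assoc, Hq2, comp_id_r. reflexivity.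
  - intros H Ybar Xbar y x fbar Hpb M Mm a' b' HM Ha Hb.
    destruct (image_fact Hreg _ _ y) as [Q [e [m' [He [Hm' Hme]]]]].
    destruct (proj1 (proj2 Hreg) _ _ _ f m') as [X' [n [f' Hn]]].
    pose proof (@pb_mono _ _ _ _ _ _ _ _ _ Hn Hm') as Hnm.
    destruct (proj2 Hn Xbar x (e \o fbar)) as [g [[Hg1 Hg2] _]].
    { rewrite comp_assoc, Hme. exact (proj1 Hpb). }
    assert (Hpb2 : is_pullback e f' fbar g).
    { split. { symmetry; exact Hg2. }
      intros W q1 q2 Hq.
      destruct (proj2 Hpb W (n \o q2) q1) as [u [[Hu1 Hu2] Huu]].
      { rewrite comp_assoc, (proj1 Hn), <- comp_assoc, <- Hq, comp_assoc, Hme.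
        reflexivity. }
      exists u. split. split. exact Hu2.
      apply Hnm. rewrite comp_assoc, Hg1. exact Hu1.
      intros u' H1 H2. apply Huu. rewrite <- H2, <- Hg1, comp_assoc. reflexivity.
      exact H1. }
    pose proof (proj2 (proj2 (proj2 Hreg)) _ _ _ _ e f' fbar g He Hpb2) as Hgre.
    destruct (@regepi_lift E _ _ _ _ _ _ a' n Hgre HM) as [k Hk].
    { rewrite Ha. symmetry; exact Hg1. }
    assert (E1 : Mm \o b' = idm X \o s) by (rewrite comp_id_l; exact Hb).
    assert (E2 : Mm \o k = idm X \o n) by (rewrite comp_id_l; exact Hk).
    destruct (H _ _ m' n f' Hm' Hn M X Mm (idm X) b' k HM E1 E2) as [d [[Hd _] _]].
    exists d. split; [|exact Hd].
    apply HM. rewrite comp_assoc, Hd, comp_id_l, comp_id_r. reflexivity.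
Qed.
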